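(* Let $X$ be a Polish space, $(Y,d)$ a Polish metric space, $Z$ a topological space, and $P: X \rightsquigarrow Y$ a tight Feller kernel. Let $R \subseteq X \times Z$ and $S \subseteq Y \times Z$ be closed and $\epsilon \ge 0$. Then $$P_{!W}^\epsilon(R \cap P^{*,0}_W S) \subseteq P_{!W}^\epsilon R \cap \{(\nu,z) \in \mathcal{P}(Y) \times Z : \nu \in \mathrm{Cure}_\epsilon(S_z)\}.$$
   Context: $W_1(\mu,\nu) = \inf_{\pi \in \Pi(\mu,\nu)} \int d(y,y')\,d\pi$. For closed $A \subseteq Y$, $\mathcal{P}_A = \{\nu \in \mathcal{P}_1(Y) : \mathrm{supp}(\nu) \subseteq A\}$ ($\mathcal{P}_1$ = probability measures with finite first moment) and $W_1(\mu,\mathcal{P}_A) = \inf_{\nu \in \mathcal{P}_A} W_1(\mu,\nu)$; $\mathrm{Cure}_\epsilon(A) = \{\nu \in \mathcal{P}(Y) : W_1(\nu, \mathcal{P}_A) \le \epsilon\}$. $S_z = \{y : (y,z) \in S\}$. Wasserstein pullback: $P^{*,\eta}_W S = \{(x,z) : W_1(P(x), \mathcal{P}_{S_z}) \le \eta\}$. Wasserstein pushforward: $P_{!W}^\epsilon T = \{(\nu,z) \in \mathcal{P}(Y) \times Z : \exists x,\ (x,z) \in T,\ W_1(P(x),\nu) \le \epsilon\}$. Feller/tight as usual for Markov kernels. *)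

(* Defs.v *)
From HB Require Import structures.
From mathcomp Require Import all_boot all_order all_algebra.
From mathcomp Require Import all_classical all_reals all_analysis.
From mathcomp Require Import measurable_realfun.
Set Implicit Arguments.
Unset Strict Implicit.
Unset Printing Implicit Defensive.
Import Order.TTheory GRing.Theory Num.Theory.
Import numFieldNormedType.Exports.
Local Open Scope classical_set_scope.
Local Open Scope ring_scope.

Definition borel (T : ptopologicalType) : measurableType (@open T).-sigma :=
  g_sigma_algebraType (@open T).

Section defs.
Context {R : realType}.

Definition polish_metric {T : topologicalType} (dist : T -> T -> R) : Prop :=
  (forall x y, 0 <= dist x y) /\
      (forall x y, dist x y = 0 <-> x = y) /\
      (forall x y, dist x y = dist y x) /\
      (forall x y z, dist x z <= dist x y + dist y z) /\
      (forall x, nbhs x = filter_from [set e : R | 0 < e]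
                                      (fun e => [set y | dist x y < e])) /\
      (forall u : nat -> T,
          (forall e : R, 0 < e -> exists N, forall m n, (N <= m)%N -> (N <= n)%N ->
                dist (u m) (u n) < e) ->
          exists l, forall e : R, 0 < e -> exists N, forall n, (N <= n)%N ->
                dist (u n) l < e) /\
      (exists D : set T, countable D /\ dense D).

Definition polish_space (T : topologicalType) : Prop :=
  exists dist : T -> T -> R, polish_metric dist.

Section kernel_defs.
Context (X Y : ptopologicalType).

Definition markov_kernel (P : X -> probability (borel Y) R) : Prop :=
  forall A : set (borel Y), measurable A ->
    measurable_fun (setT : set (borel X)) ((fun x => P x A) : borel X -> \bar R).

Definition feller (P : X -> probability (borel Y) R) : Prop :=
  forall f : Y -> R, continuous f -> (exists M : R, forall y, `|f y| <= M) ->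
    continuous (fun x : X => Rintegral (P x) setT (f : borel Y -> R)).

Definition tight_family (F : set (probability (borel Y) R)) : Prop :=
  forall e : R, 0 < e -> exists K : set Y, compact K /\
    forall mu, F mu -> (mu (~` (K : set (borel Y))) <= e%:E)%E.

Definition tight_kernel (P : X -> probability (borel Y) R) : Prop :=
  forall K : set X, compact K -> tight_family (P @` K).
End kernel_defs.

Section wasserstein.
Context (Y : ptopologicalType) (d : Y -> Y -> R).
Local Notation PY := (probability (borel Y) R).

Definition coupling (mu nu : PY) (pi : probability (borel Y * borel Y)%type R)
  : Prop :=
  forall A : set (borel Y), measurable A ->
    pi (A `*` setT) = mu A /\ pi (setT `*` A) = nu A.

Definition W1 (mu nu : PY) : \bar R :=
  ereal_inf [set (\int[pi]_p (d p.1 p.2)%:E)%E | pi in coupling mu nu].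

Definition supp (nu : PY) : set Y :=
  [set y | forall U : set Y, open U -> U y -> (0 < nu (U : set (borel Y)))%E].

Definition finite_first_moment (nu : PY) : Prop :=
  exists y0 : Y, (\int[nu]_y (d y0 y)%:E < +oo)%E.

Definition PA (A : set Y) : set PY :=
  [set nu | finite_first_moment nu /\ supp nu `<=` A].

Definition W1_set (mu : PY) (A : set Y) : \bar R :=
  ereal_inf [set W1 mu nu | nu in PA A].

Definition Cure (eps : R) (A : set Y) : set PY :=
  [set nu | (W1_set nu A <= eps%:E)%E].

Definition section {Z : Type} (S : set (Y * Z)) (z : Z) : set Y :=
  [set y | S (y, z)].
End wasserstein.

Section pull_push.
Context (X Y : ptopologicalType) (Z : Type) (d : Y -> Y -> R)
        (P : X -> probability (borel Y) R).

Definition W_pullback (eta : R) (S : set (Y * Z)) : set (X * Z) :=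
  [set xz | (W1_set d (P xz.1) (section S xz.2) <= eta%:E)%E].

Definition W_pushforward (eps : R) (T : set (X * Z))
  : set (probability (borel Y) R * Z) :=
  [set nz | exists x, T (x, nz.2) /\ (W1 d (P x) nz.1 <= eps%:E)%E].
End pull_push.
End defs.

(* Main.v *)
Require Import Defs.
From HB Require Import structures.
From mathcomp Require Import all_boot all_order all_algebra.
From mathcomp Require Import all_classical all_reals all_analysis.
From mathcomp Require Import measurable_realfun.
From mathcomp Require Import ring lra.
Import Order.TTheory GRing.Theory Num.Theory.
Local Open Scope classical_set_scope.
Local Open Scope ring_scope.

Section swapmf.
Context d1 d2 (T1 : measurableType d1) (T2 : measurableType d2).
Definition swapf : T1 * T2 -> T2 * T1 := @unstable.swap T1 T2.
HB.instance Definition _ := isMeasurableFun.Build _ _ _ _ swapf (@measurable_swap _ _ T1 T2).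
End swapmf.

Section metric.
Context {R : realType} (Y : ptopologicalType) (d : Y -> Y -> R)
  (hY : polish_metric d).

Lemma d_ge0 x y : 0 <= d x y. Proof. by case: hY. Qed.
Lemma d_sym x y : d x y = d y x. Proof. by case: hY => _ [_ [+ _]]. Qed.
Lemma d_tri x y z : d x z <= d x y + d y z.
Proof. by case: hY => _ [_ [_ [+ _]]]. Qed.
Lemma d_refl x : d x x = 0. Proof. by case: hY => _ [+ _] => /(_ x x) [_ ->]. Qed.

Lemma d_nbhs x (A : set Y) :
  nbhs x A <-> exists2 e : R, 0 < e & [set y | d x y < e] `<=` A.
Proof.
case: hY => _ [_ [_ [_ [hn _]]]]; rewrite hn; split.
- by move=> [e /= e0 he]; exists e.
- by move=> [e e0 he]; exists e.
Qed.

Lemma ball_open x (r : R) : open [set y | d x y < r].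
Proof.
rewrite openE => y /= hy; rewrite /interior; apply/d_nbhs.
exists (r - d x y); first by rewrite subr_gt0.
move=> w /= hw; have := d_tri x y w; move=> h.
by apply: (le_lt_trans h); rewrite -ltrBrDl.
Qed.

Lemma ball_meas x (r : R) : measurable ([set y | d x y < r] : set (borel Y)).
Proof. by apply: sub_sigma_algebra; exact: ball_open. Qed.

Lemma open_meas (A : set Y) : open A -> measurable (A : set (borel Y)).
Proof. by move=> oA; apply: sub_sigma_algebra. Qed.

Lemma meas_d1 y0 : measurable_fun setT (fun y : borel Y => d y0 y).
Proof.
move=> _; apply: (measurability _ (RGenInftyO.measurableE R)) => //.
move=> _ [_ [x ->] <-].
rewrite setTI.
have -> : (fun y : borel Y => d y0 y) @^-1` `]-oo, x[ = [set y | d y0 y < x].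
  by apply/seteqP; split => y /=; rewrite in_itv.
exact: ball_meas.
Qed.

Lemma enum_dense : exists e : nat -> Y,
  forall x (r : R), 0 < r -> exists n, d x (e n) < r.
Proof.
case: hY => _ [_ [_ [_ [_ [_ [D [cD dD]]]]]]].
move/countable_injP: cD => [f finj].
exists (fun n => xget point [set q | D q /\ f q = n]).
move=> x r r0.
have [q [Bq Dq]] : [set y | d x y < r] `&` D !=set0.
  apply: dD; last exact: ball_open.
  by exists x; rewrite /= d_refl.
exists (f q).
have : [set q0 | D q0 /\ f q0 = f q] (xget point [set q0 | D q0 /\ f q0 = f q]).
  by apply: xgetPex; exists q.
move=> [Dq' fq]; rewrite (finj _ _ _ _ fq) //; by rewrite inE.
Qed.

Lemma small_inv (t : R) : 0 < t -> exists m : nat, (m.+1%:R)^-1 < t.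
Proof.
move=> t0; exists (Num.trunc t^-1).
have h := truncnS_gt t^-1.
rewrite -[X in _ < X]invrK ltf_pV2 //.
- by rewrite posrE ltr0n.
- by rewrite posrE invr_gt0.
Qed.

Lemma meas_d2 : measurable_fun setT
  (fun p : (borel Y * borel Y)%type => d p.1 p.2).
Proof.
move=> _; apply: (measurability _ (RGenInftyO.measurableE R)) => //.
move=> _ [_ [x ->] <-].
rewrite setTI.
have [e he] := enum_dense.
pose s (m : nat) : R := (m.+1%:R)^-1.
have -> : (fun p : (borel Y * borel Y)%type => d p.1 p.2) @^-1` `]-oo, x[ =
  \bigcup_n \bigcup_m ([set w | d (e n) w < s m] `*` [set w | d (e n) w < x - s m]).
  apply/seteqP; split => [[p1 p2]|[p1 p2]] /=; rewrite ?in_itv /=.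
  - move=> hx.
    have hpos : 0 < (x - d p1 p2) / 2 by rewrite divr_gt0 // subr_gt0.
    have [m hm] := small_inv _ hpos.
    have spos : 0 < s m by rewrite /s invr_gt0.
    have [n hn] := he p1 (s m) spos.
    exists n => //; exists m => //=; split; first by rewrite d_sym.
    apply: (le_lt_trans (d_tri _ p1 _)).
    rewrite (d_sym (e n) p1); move: hn hm; rewrite /s => hn hm.
    move: (m.+1%:R^-1) hn hm => c hn hm.
    lra.
  - move=> [n _ [m _ [/= h1 h2]]].
    apply: (le_lt_trans (d_tri _ (e n) _)).
    by rewrite d_sym -(subrK (s m) x) addrC ltrD // -ltrBrDr.
apply: bigcupT_measurable => n; apply: bigcupT_measurable => m.
by apply: measurableX; exact: ball_meas.
Qed.

Local Notation PY := (probability (borel Y) R).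

Lemma supp_null (mu : PY) (A : set Y) : closed A -> supp mu `<=` A ->
  mu (~` A : set (borel Y)) = 0%E.
Proof.
move=> cA sA.
have [e he] := enum_dense.
pose s (m : nat) : R := (m.+1%:R)^-1.
pose B n m : set (borel Y) := [set w | d (e n) w < s m].
pose G n m : set (borel Y) := if mu (B n m) == 0%E then B n m else set0.
have mG n m : measurable (G n m) by rewrite /G; case: ifPn => _ //; exact: ball_meas.
have nG n m : mu.-negligible (G n m).
  exists (G n m); split => //; rewrite /G; case: ifPn => [/eqP //|_].
  exact: measure0.
have : mu.-negligible (\bigcup_n \bigcup_m G n m).
  apply: negligible_bigcup => n; exact: negligible_bigcup.
move=> [N [mN N0 sN]].
have cov : (~` A : set (borel Y)) `<=` N.
  move=> w nAw; apply: sN.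
  have nsw : ~ supp mu w by move=> /sA.
  have [U [oU Uw U0]] : exists U : set Y, [/\ open U, U w & ~ (0 < mu (U : set (borel Y)))%E].
    apply: contra_notP nsw => hn U oU Uw; apply: contra_notP hn => h.
    by exists U.
  have mU0 : mu (U : set (borel Y)) = 0%E.
    by apply/eqP; rewrite eq_le measure_ge0 andbT leNgt; apply/negP.
  have : nbhs w U by move: oU; rewrite openE => /(_ w Uw).
  move=> /d_nbhs [e0 e00 he0].
  have hpos : 0 < e0 / 2 by rewrite divr_gt0.
  have [m hm] := small_inv _ hpos.
  have spos : 0 < s m by rewrite /s invr_gt0.
  have [n hn] := he w (s m) spos.
  have BU : B n m `<=` U.
    move=> y hy; rewrite /B /= in hy; apply: he0 => /=.
    apply: (le_lt_trans (d_tri _ (e n) _)).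
    move: hn hy hm; rewrite /s; move: (m.+1%:R^-1) => c hn hy hm.
    lra.
  have Bn0 : mu (B n m) = 0%E.
    apply/eqP; rewrite eq_le measure_ge0 andbT -mU0.
    apply: le_measure => //; rewrite inE; [exact: ball_meas|exact: open_meas].
  exists n => //; exists m => //; rewrite /G Bn0 eqxx /B /=.
  by rewrite d_sym.
apply/eqP; rewrite eq_le measure_ge0 andbT -N0.
apply: le_measure => //; rewrite inE //.
by apply: open_meas; exact: closed_openC.
Qed.

Local Open Scope ereal_scope.

Lemma marg1 (mu nu : PY) pi (hc : coupling mu nu pi) (f : borel Y -> \bar R) :
  measurable_fun setT f -> (forall y, 0 <= f y) ->
  \int[pi]_p f p.1 = \int[mu]_y f y.
Proof.
move=> mf f0.
have := @ge0_integral_pushforward _ _ _ _ _ _ measurable_fst pi setT f measurableT mf (fun y _ => f0 y).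
rewrite preimage_setT => <-.
apply: eq_measure_integral => A mA _.
rewrite [LHS]/= /pushforward.
transitivity (pi (A `*` setT)); last by rewrite (proj1 (hc A mA)).
by congr (pi _); apply/seteqP; split => -[a b] //=; move=> [].
Qed.

Lemma marg2 (mu nu : PY) pi (hc : coupling mu nu pi) (f : borel Y -> \bar R) :
  measurable_fun setT f -> (forall y, 0 <= f y) ->
  \int[pi]_p f p.2 = \int[nu]_y f y.
Proof.
move=> mf f0.
have := @ge0_integral_pushforward _ _ _ _ _ _ measurable_snd pi setT f measurableT mf (fun y _ => f0 y).
rewrite preimage_setT => <-.
apply: eq_measure_integral => A mA _.
rewrite [LHS]/= /pushforward.
transitivity (pi (setT `*` A)); last by rewrite (proj2 (hc A mA)).
by congr (pi _); apply/seteqP; split => -[a b] //=; move=> [].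
Qed.

Lemma meas_d2E : measurable_fun setT
  (fun p : (borel Y * borel Y)%type => (d p.1 p.2)%:E).
Proof. by apply/measurable_EFinP; exact: meas_d2. Qed.

Lemma W1_swap (mu nu : PY) : W1 d nu mu <= W1 d mu nu.
Proof.
apply: ereal_inf_le_tmp => _ [pi hc <-].
exists (distribution pi (@swapf _ _ (borel Y) (borel Y))).
  move=> A mA; rewrite /distribution /= /pushforward; split.
  - transitivity (pi (setT `*` A)); last by rewrite (proj2 (hc A mA)).
    by congr (pi _); apply/seteqP; split => -[a b] //=; move=> [].
  - transitivity (pi (A `*` setT)); last by rewrite (proj1 (hc A mA)).
    by congr (pi _); apply/seteqP; split => -[a b] //=; move=> [].
rewrite ge0_integral_distribution //=; last first.
  by move=> p; rewrite lee_fin d_ge0.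
  exact: meas_d2E.
by apply: eq_integral => p _; rewrite /= d_sym.
Qed.

Lemma near_PA (mu : PY) (A : set Y) (h : W1_set d mu A <= 0%:E) (del : R) :
  (0 < del)%R -> exists nu pi, [/\ PA d A nu, coupling mu nu pi &
    \int[pi]_p (d p.1 p.2)%:E < del%:E].
Proof.
move=> del0.
have : W1_set d mu A < del%:E by apply: (le_lt_trans h); rewrite lte_fin.
move=> /ereal_inf_lt [_ [nu hnu <-]].
move=> /ereal_inf_lt [_ [pi hpi <-]] hlt.
by exists nu, pi.
Qed.

Lemma moment_PA (mu : PY) (A : set Y) (h : W1_set d mu A <= 0%:E) :
  finite_first_moment d mu.
Proof.
have [nu [pi [[[y0 hm] _] hc hcost]]] := near_PA mu A h 1 ltr01.
exists y0.
have md1 : measurable_fun setT (fun y : borel Y => (d y0 y)%:E).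
  by apply/measurable_EFinP; exact: meas_d1.
have md1s : measurable_fun setT (fun p : (borel Y * borel Y)%type => (d y0 p.2)%:E).
  exact: (measurableT_comp md1 measurable_snd).
rewrite -(marg1 _ _ _ hc (fun y : borel Y => (d y0 y)%:E)) //; last by move=> y; rewrite lee_fin d_ge0.
apply: (@le_lt_trans _ _ (\int[pi]_p ((d p.1 p.2)%:E + (d y0 p.2)%:E))).
  apply: ge0_le_integral => //.
  - by move=> p _; rewrite lee_fin d_ge0.
  - exact: (measurableT_comp md1 measurable_fst).
  - by apply: emeasurable_funD => //; exact: meas_d2E.
  move=> p _; rewrite -EFinD lee_fin.
  by rewrite addrC (d_sym p.1 p.2); apply: d_tri.
rewrite ge0_integralD //; try (by move=> p _; rewrite lee_fin d_ge0); try exact: meas_d2E.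
rewrite (marg2 _ _ _ hc (fun y : borel Y => (d y0 y)%:E)) //; last by move=> y; rewrite lee_fin d_ge0.
apply: lte_add_pinfty => //.
by apply: (lt_trans hcost); rewrite ltry.
Qed.

Lemma supp_PA (mu : PY) (A : set Y) (cA : closed A) (h : W1_set d mu A <= 0%:E) :
  supp mu `<=` A.
Proof.
move=> y hy; apply: contrapT => nAy.
have : nbhs y (~` A).
  by move: (closed_openC cA); rewrite openE => /(_ y nAy).
move=> /d_nbhs [e0 e00 he0].
pose r := (e0 / 2)%R.
have r0 : (0 < r)%R by rewrite divr_gt0.
pose U : set Y := [set w | (d y w < r)%R].
have mU : measurable (U : set (borel Y)) by exact: ball_meas.
have mA : measurable (A : set (borel Y)).
  by rewrite -[A]setCK; apply: measurableC; apply: open_meas; exact: closed_openC.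
have U0 : 0 < mu (U : set (borel Y)).
  by apply: hy; [exact: ball_open|rewrite /U /= d_refl].
have Ufin : mu (U : set (borel Y)) \is a fin_num.
  rewrite ge0_fin_numE ?measure_ge0 //.
  by apply: (le_lt_trans (probability_le1 mu mU)); rewrite ltry.
pose a := fine (mu (U : set (borel Y))).
have Ua : mu (U : set (borel Y)) = a%:E by rewrite /a fineK.
have a0 : (0 < a)%R by rewrite -lte_fin -Ua.
have [nu [pi [[_ snu] hc hcost]]] := near_PA mu A h (r * a) (mulr_gt0 r0 a0).
have nuA : nu (~` A : set (borel Y)) = 0 by apply: supp_null.
have h1 : mu (U : set (borel Y)) <= pi (U `*` A).
  rewrite -(proj1 (hc U mU)).
  apply: (@le_trans _ _ (pi ((U `*` A) `|` (setT `*` ~` A)))).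
    apply: le_measure; rewrite ?inE.
    - by apply: measurableX.
    - by apply: measurableU; apply: measurableX => //; exact: measurableC.
    - by move=> [w s] /= [Uw _]; case: (pselect (A s)) => As; [left|right].
  apply: (le_trans (measureU2 _ _ _)).
  - by apply: measurableX.
  - by apply: measurableX => //; exact: measurableC.
  rewrite [X in _ + X <= _](_ : _ = 0) ?adde0 //.
  transitivity (nu (~` A : set (borel Y))); [exact: (proj2 (hc _ (measurableC mA)))|exact: nuA].
have h2 : r%:E * pi (U `*` A) <= \int[pi]_p (d p.1 p.2)%:E.
  have mUA : measurable (U `*` A : set (borel Y * borel Y)%type) by exact: measurableX.
  rewrite -integral_cst //.
  apply: (@le_trans _ _ (\int[pi]_(p in U `*` A) (d p.1 p.2)%:E)).
    apply: ge0_le_integral => //.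
    - by move=> p _; rewrite /cst lee_fin ltW.
    - by apply: measurable_funTS; exact: meas_d2E.
    move=> [w s] [/= Uw As]; rewrite /cst lee_fin.
    have : ~ (d y s < e0)%R by move=> /he0.
    move=> /negP; rewrite -leNgt => hs.
    have := d_tri y w s.
    move: Uw; rewrite /U /r /= => Uw hd.
    lra.
  apply: ge0_subset_integral => //.
  - exact: meas_d2E.
  - by move=> p _; rewrite lee_fin d_ge0.
have : (r * a)%:E <= \int[pi]_p (d p.1 p.2)%:E.
  apply: le_trans h2; rewrite EFinM -Ua.
  by apply: lee_wpmul2l => //; rewrite lee_fin ltW.
by rewrite leNgt hcost.
Qed.

End metric.

Lemma section_closed (Y : ptopologicalType) (Z : topologicalType)
  (S : set (Y * Z)) (hS : closed S) (z : Z) : closed (section S z).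
Proof.
rewrite /section.
have -> : [set y | S (y, z)] = (fun y => (y, z)) @^-1` S by [].
apply: preimage_closed => //.
move=> y _; apply: cvg_pair; [exact: cvg_id|exact: cvg_cst].
Qed.

Theorem mainTheorem20 (R : realType) (X Y : ptopologicalType)
  (Z : topologicalType) (d : Y -> Y -> R)
  (P : X -> probability (borel Y) R)
  (hX : polish_space (R := R) X) (hY : polish_metric d)
  (hP : markov_kernel P) (hFeller : feller P) (hTight : tight_kernel P)
  (Rel : set (X * Z)) (S : set (Y * Z)) (hR : closed Rel) (hS : closed S)
  (eps : R) (heps : 0 <= eps) :
  W_pushforward d P eps (Rel `&` W_pullback d P 0 S)
  `<=` W_pushforward d P eps Rel
       `&` [set nz | Cure d eps (section S nz.2) nz.1].
Proof.
move=> [nu z] /= [x [[Rxz hpull] hW]]; split; first by exists x.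
rewrite /Cure /=.
have cA := section_closed _ _ _ hS z.
have hPA : PA d (section S z) (P x).
  split; first exact: (@moment_PA R Y d hY (P x) _ hpull).
  exact: (@supp_PA R Y d hY (P x) _ cA hpull).
have hW' : (W1 d nu (P x) <= eps%:E)%E.
  exact: le_trans (@W1_swap R Y d hY _ _) hW.
apply: le_trans hW'.
by apply: ereal_inf_lbound; exists (P x).
Qed.
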